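(* Let $n\ge2$ and let $I$ be an ideal of $\Phi_{A_{n-1}}$ such that $I^c$ is full. Let $A^{(1)}|\dots|A^{(r)}$ be the partition of $[n]$ in accordance with $I$. Then for $1\le x<y\le n$, one has $e_x-e_y\in I^c$ if and only if either $x$ and $y$ lie in the same block $A^{(u)}$, or $x\in A^{(u)}$, $y\in A^{(v)}$ with $u\ne v$ and $s_I(A^{(u)})\cap s_I(A^{(v)})\neq\emptyset$. Equivalently, identifying $e_x-e_y$ with the pair $\{x,y\}$, $$I^c=\bigsqcup_{u=1}^r\Big(\binom{A^{(u)}}{2}\ \sqcup\ \bigsqcup_{v\in R^{(u)}}\big\{\{x,y\}: x\in A^{(u)},\,y\in A^{(v)}\big\}\Big),$$ where $R^{(u)}=\{v\in\{u+1,\dots,r\}: s_I(A^{(u)})\cap s_I(A^{(v)})\ne\emptyset\}$.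
   Context: $\Phi^+_{A_{n-1}}=\{e_i-e_j:1\le i<j\le n\}$ with simple roots $e_i-e_{i+1}$, $i\in[n-1]$. The partial order $\preceq$ on $\Phi^+_{A_{n-1}}$: $u\preceq v$ iff $v-u$ is a nonnegative integer combination of simple roots; concretely $e_i-e_j\preceq e_{i'}-e_{j'}$ iff $i'\le i$ and $j\le j'$. An ideal is a subset $I\subseteq\Phi^+_{A_{n-1}}$ with $u\in I$, $u\preceq v\Rightarrow v\in I$; $I^c=\Phi^+_{A_{n-1}}\setminus I$. $I^c$ is full if it contains every simple root $e_i-e_{i+1}$. Let $e_{i_1}-e_{j_1},\dots,e_{i_k}-e_{j_k}$ be the maximal elements of $I^c$ (the generators). The signature of $u\in[n]$ is $s_I(u)=\{l\in[k]: i_l\le u\le j_l\}$. The partition of $[n]$ in accordance with $I$ is the partition $A^{(1)}|\dots|A^{(r)}$ into the maximal nonempty subsets on which $s_I$ is constant, indexed so that $\min A^{(1)}<\dots<\min A^{(r)}$; $s_I(A^{(u)})$ denotes the common value of $s_I$ on $A^{(u)}$. *)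

(* Defs.v *)
From mathcomp Require Import all_boot.
Set Implicit Arguments. Unset Strict Implicit. Unset Printing Implicit Defensive.

(* e_i - e_j, encoded as (i, j), is a positive root of A_{n-1} *)
Definition is_root (n : nat) (r : nat * nat) : bool :=
  (1 <= r.1) && (r.1 < r.2) && (r.2 <= n).

(* e_i - e_j <= e_i' - e_j'  iff  i' <= i and j <= j' *)
Definition rprec (u v : nat * nat) : bool := (v.1 <= u.1) && (u.2 <= v.2).

Definition is_ideal (n : nat) (I : pred (nat * nat)) : Prop :=
  (forall u, I u -> is_root n u) /\
  (forall u v, is_root n u -> is_root n v -> I u -> rprec u v -> I v).

Definition compl (n : nat) (I : pred (nat * nat)) (u : nat * nat) : bool :=
  is_root n u && ~~ I u.

Definition full (n : nat) (I : pred (nat * nat)) : Prop :=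
  forall i, 1 <= i -> i < n -> compl n I (i, i.+1).

Definition generator (n : nat) (I : pred (nat * nat)) (g : nat * nat) : Prop :=
  compl n I g /\ (forall v, compl n I v -> rprec g v -> v = g).

(* g belongs to the signature s_I(u), i.e. i_g <= u <= j_g *)
Definition in_sig (n : nat) (I : pred (nat * nat)) (u : nat) (g : nat * nat) : Prop :=
  generator n I g /\ g.1 <= u <= g.2.

Definition same_sig (n : nat) (I : pred (nat * nat)) (a b : nat) : Prop :=
  forall g, in_sig n I a g <-> in_sig n I b g.

Definition sig_const_on (n : nat) (I : pred (nat * nat)) (B : pred nat) : Prop :=
  (forall z, B z -> 1 <= z <= n) /\ (forall a b, B a -> B b -> same_sig n I a b).

(* B is a block of the partition of [n] in accordance with I: a maximal
   nonempty subset of [n] on which s_I is constant *)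
Definition is_block (n : nat) (I : pred (nat * nat)) (B : pred nat) : Prop :=
  sig_const_on n I B /\ (exists z, B z) /\
  (forall B', sig_const_on n I B' -> (forall z, B z -> B' z) -> forall z, B' z -> B z).

(* Main.v *)
Require Import Defs.
From mathcomp Require Import all_boot.
From mathcomp Require Import zify.
From Stdlib Require Import Classical ClassicalEpsilon.
Set Implicit Arguments. Unset Strict Implicit.

Lemma root_of n I v : compl n I v -> (1 <= v.1) /\ (v.1 < v.2) /\ (v.2 <= n).
Proof. by case/andP=> /andP[/andP[h1 h2] h3] _. Qed.

Lemma gen_above n I : forall v, compl n I v -> exists g, generator n I g /\ rprec v g.
Proof.
suff H: forall k v, compl n I v -> n - (v.2 - v.1) <= k ->
  exists g, generator n I g /\ rprec v g.
  by move=> v Hv; apply: (H n v Hv); lia.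
elim=> [|k IH] v Hv Hk.
  have := root_of Hv; lia.
case: (classic (generator n I v)) => Hg.
  exists v; split => //; rewrite /rprec; apply/andP; split => //.
have [w [Hw [Hr Hne]]] : exists w, compl n I w /\ rprec v w /\ w <> v.
  apply: NNPP => Hn; apply: Hg; split => // w Hw Hr.
  apply: NNPP => Hneq; apply: Hn; by exists w.
move: Hr; rewrite /rprec => /andP[h1 h2].
have Hlt : w.1 < v.1 \/ v.2 < w.2.
  move: Hne h1 h2; clear; case: w => a b; case: v => c d /= Hne h1 h2.
  case: (ltnP a c) => ?; first by left.
  case: (ltnP d b) => ?; first by right.
  exfalso; apply: Hne; congr pair; lia.
have := root_of Hw; have := root_of Hv => ? ?.
have [g [Hgg Hrg]] := IH w Hw ltac:(lia).
exists g; split => //; move: Hrg; rewrite /rprec => /andP[? ?]; apply/andP; lia.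
Qed.

Lemma compl_of_gen n I x y g : is_ideal n I -> 1 <= x -> x < y -> y <= n ->
  generator n I g -> g.1 <= x -> y <= g.2 -> compl n I (x, y).
Proof.
move=> [Hroot Hup] hx hxy hy [Hg _] h1 h2.
have Hrx : is_root n (x, y) by rewrite /is_root /=; apply/andP; split => //; apply/andP.
rewrite /compl Hrx /=; apply/negP => HI.
have Hrg : is_root n g by case/andP: Hg.
have := Hup _ _ Hrx Hrg HI; rewrite /rprec /= h1 h2 => /(_ isT) HIg.
by move: Hg; rewrite /compl HIg andbF.
Qed.

Definition blk n I z : pred nat := fun w =>
  if excluded_middle_informative ((1 <= w <= n) /\ same_sig n I w z) then true else false.

Lemma blkP n I z w : blk n I z w <-> ((1 <= w <= n) /\ same_sig n I w z).
Proof. by rewrite /blk; case: excluded_middle_informative. Qed.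

Lemma ss_sym n I a b : same_sig n I a b -> same_sig n I b a.
Proof. by move=> H g; split => /H. Qed.
Lemma ss_trans n I a b c : same_sig n I a b -> same_sig n I b c -> same_sig n I a c.
Proof. by move=> H1 H2 g; split => [/H1/H2|/H2/H1]. Qed.

Lemma blk_block n I z : 1 <= z <= n -> is_block n I (blk n I z).
Proof.
move=> hz; split; [split|split].
- by move=> w /blkP [].
- move=> a b /blkP [_ Ha] /blkP [_ Hb]; exact: ss_trans Ha (ss_sym Hb).
- by exists z; apply/blkP; split.
- move=> B' [HB1 HB2] Hsub w Hw; apply/blkP; split; first exact: HB1.
  apply: HB2 => //; apply: Hsub; apply/blkP; split => //.
Qed.

Theorem mainTheorem10 (n : nat) (I : pred (nat * nat)) :
  2 <= n -> is_ideal n I -> full n I ->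
  forall x y, 1 <= x -> x < y -> y <= n ->
  (compl n I (x, y) <->
     ((exists A, is_block n I A /\ A x /\ A y) \/
      (exists A B, is_block n I A /\ is_block n I B /\ A x /\ B y /\
         ~ (A =1 B) /\ (exists g, in_sig n I x g /\ in_sig n I y g)))).
Proof.
move=> hn Hid Hfull x y hx hxy hy; split.
- move=> Hc.
  have [g [Hg Hr]] := gen_above Hc.
  move: Hr; rewrite /rprec /= => /andP[h1 h2].
  have hxn : 1 <= x <= n by apply/andP; lia.
  have hyn : 1 <= y <= n by apply/andP; lia.
  have bxx : blk n I x x by apply/blkP; split; [exact: hxn | move=> g0; split].
  have byy : blk n I y y by apply/blkP; split; [exact: hyn | move=> g0; split].
  case: (classic (same_sig n I x y)) => Hs.
    left; exists (blk n I x); split; first exact: blk_block.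
    split; first exact: bxx.
    apply/blkP; split; [exact: hyn | exact: ss_sym].
  right; exists (blk n I x), (blk n I y).
  split; first exact: blk_block.
  split; first exact: blk_block.
  split; first exact: bxx.
  split; first exact: byy.
  split.
    move=> Heq; apply: Hs; have := Heq x; rewrite bxx.
    by move=> /esym /blkP [].
  exists g; split; split; try exact: Hg; apply/andP; lia.
- case.
  + move=> [A [[[_ HA] _] [Ax Ay]]].
    have Hs := HA x y Ax Ay.
    have Hc : compl n I (x, x.+1) by apply: Hfull; lia.
    have [g [Hg Hr]] := gen_above Hc.
    move: Hr; rewrite /rprec /= => /andP[h1 h2].
    have : in_sig n I x g by split => //; apply/andP; lia.
    move=> /Hs [_ /andP[h3 h4]].
    exact: (compl_of_gen Hid hx hxy hy Hg).
  + move=> [A [B [_ [_ [_ [_ [_ [g [[Hg /andP[h1 _]] [_ /andP[_ h2]]]]]]]]]]].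
    exact: (compl_of_gen Hid hx hxy hy Hg).
Qed.
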